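(* Let $m,g>0$, $k\in\mathbb{N}$, $\gamma\in\mathbb{R}$, and let $(\psi_1,\psi_2)$ be a sufficiently smooth solution, decaying with its derivatives as $|x|\to\infty$, of $$i\partial_t\psi_1=\partial_x\psi_2-g(|\psi_1|^2-|\psi_2|^2)^k\psi_1+m\psi_1+i\gamma\psi_2,\qquad i\partial_t\psi_2=-\partial_x\psi_1+g(|\psi_1|^2-|\psi_2|^2)^k\psi_2-m\psi_2+i\gamma\psi_1.$$ Then the ($\gamma$-independent) energy $$E(t)=\frac12\int_{\mathbb{R}}\Big[\overline{\psi_1}\,\partial_x\psi_2-\overline{\psi_2}\,\partial_x\psi_1+m(|\psi_1|^2-|\psi_2|^2)-\frac{g}{k+1}\big(|\psi_1|^2-|\psi_2|^2\big)^{k+1}\Big]dx$$ is real and conserved: $dE/dt=0$, for every value of $\gamma$.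
   Context: This is the $\mathcal{P}\mathcal{T}$-symmetric 1D Soler model (gain–loss term $i\gamma\sigma_1\psi$ with $\sigma_1$ the first Pauli matrix). *)

(* Defs.v *)
From Stdlib Require Import Reals.
Open Scope R_scope.

Definition Cpx : Type := (R * R)%type.
Definition RtoC (r : R) : Cpx := (r, 0).
Definition Ci : Cpx := (0, 1).
Definition Cadd (z w : Cpx) : Cpx := (fst z + fst w, snd z + snd w).
Definition Copp (z : Cpx) : Cpx := (- fst z, - snd z).
Definition Csub (z w : Cpx) : Cpx := Cadd z (Copp w).
Definition Cmul (z w : Cpx) : Cpx :=
  (fst z * fst w - snd z * snd w, fst z * snd w + snd z * fst w).
Definition Cconj (z : Cpx) : Cpx := (fst z, - snd z).
Definition Cnorm2 (z : Cpx) : R := fst z ^ 2 + snd z ^ 2.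

Definition C_deriv (f : R -> Cpx) (x : R) (l : Cpx) : Prop :=
  derivable_pt_lim (fun s => fst (f s)) x (fst l) /\
  derivable_pt_lim (fun s => snd (f s)) x (snd l).

Definition R_improper_integral (f : R -> R) (l : R) : Prop :=
  forall eps, 0 < eps -> exists M, 0 < M /\
    forall a b, a <= - M -> M <= b ->
      exists pr : Riemann_integrable f a b, Rabs (RiemannInt pr - l) < eps.

Definition C_improper_integral (f : R -> Cpx) (l : Cpx) : Prop :=
  R_improper_integral (fun x => fst (f x)) (fst l) /\
  R_improper_integral (fun x => snd (f x)) (snd l).

Definition cont2 (f : R -> R -> R) : Prop :=
  forall t x eps, 0 < eps -> exists delta, 0 < delta /\
    forall t' x', Rabs (t' - t) < delta -> Rabs (x' - x) < delta ->
      Rabs (f t' x' - f t x) < eps.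

Definition Ccont2 (f : R -> R -> Cpx) : Prop :=
  cont2 (fun t x => fst (f t x)) /\ cont2 (fun t x => snd (f t x)).

Definition decays (f : R -> R -> Cpx) : Prop :=
  forall T, exists K, forall t x, Rabs t <= T ->
    Rabs (fst (f t x)) <= K / (1 + x ^ 2) /\ Rabs (snd (f t x)) <= K / (1 + x ^ 2).

(** "Sufficiently smooth, decaying with its derivatives": p has partial derivatives
    pt = d_t p, px = d_x p, and mixed derivative ptx = d_t d_x p = d_x d_t p,
    all jointly continuous and decaying as |x| -> oo. *)
Definition smooth_decaying (p pt px ptx : R -> R -> Cpx) : Prop :=
  (forall t x, C_deriv (fun s => p s x) t (pt t x)) /\
  (forall t x, C_deriv (fun y => p t y) x (px t x)) /\
  (forall t x, C_deriv (fun s => px s x) t (ptx t x)) /\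
  (forall t x, C_deriv (fun y => pt t y) x (ptx t x)) /\
  Ccont2 p /\ Ccont2 pt /\ Ccont2 px /\ Ccont2 ptx /\
  decays p /\ decays pt /\ decays px /\ decays ptx.

Definition rho (z1 z2 : Cpx) : R := Cnorm2 z1 - Cnorm2 z2.

Definition soler_eq1 (m g gamma : R) (k : nat) (z1 z2 z1t z2x : Cpx) : Prop :=
  Cmul Ci z1t =
  Cadd (Cadd (Cadd z2x (Copp (Cmul (RtoC (g * rho z1 z2 ^ k)) z1)))
             (Cmul (RtoC m) z1))
       (Cmul (Cmul Ci (RtoC gamma)) z2).

Definition soler_eq2 (m g gamma : R) (k : nat) (z1 z2 z2t z1x : Cpx) : Prop :=
  Cmul Ci z2t =
  Cadd (Cadd (Cadd (Copp z1x) (Cmul (RtoC (g * rho z1 z2 ^ k)) z2))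
             (Copp (Cmul (RtoC m) z2)))
       (Cmul (Cmul Ci (RtoC gamma)) z1).

Definition energy_density (m g : R) (k : nat) (z1 z2 z1x z2x : Cpx) : Cpx :=
  Cmul (RtoC (1 / 2))
    (Cadd (Csub (Cmul (Cconj z1) z2x) (Cmul (Cconj z2) z1x))
          (RtoC (m * rho z1 z2 - g / INR (k + 1) * rho z1 z2 ^ (k + 1)))).

(* Main.v *)
Require Import Defs.
From Stdlib Require Import Reals Lra Lia FunctionalExtensionality.
From Coquelicot Require Import Coquelicot.
Open Scope R_scope.

Lemma exr (f : R -> R) a b : (forall x, continuous f x) -> ex_RInt f a b.
Proof. intros H; apply (ex_RInt_continuous (V:=R_CompleteNormedModule)); intros; apply H. Qed.

Lemma inv_sq_int C p q : p <= q -> (0 < p \/ q < 0) ->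
  is_RInt (fun x => C / x^2) p q (C/p - C/q).
Proof.
  intros Hpq Hs.
  assert (Hnz : forall x, Rmin p q <= x <= Rmax p q -> x <> 0).
  { rewrite Rmin_left, Rmax_right by lra. intros x Hx; lra. }
  replace (C/p - C/q) with (minus ((fun x => - C / x) q) ((fun x => - C/x) p)).
  2:{ unfold minus, plus, opp; simpl. field. split; intro; subst; lra. }
  apply (is_RInt_derive (fun x => - C / x)).
  - intros x Hx. specialize (Hnz x Hx). auto_derive; auto. field. auto.
  - intros x Hx. specialize (Hnz x Hx). apply (ex_derive_continuous (K:=R_AbsRing) (V:=R_NormedModule)). auto_derive. auto.
Qed.

Lemma C_nonneg (f : R -> R) C : (forall x, Rabs (f x) <= C/(1+x^2)) -> 0 <= C.
Proof.
  intros H. specialize (H 0). replace (C/(1+0^2)) with C in H by (simpl; field).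
  pose proof (Rabs_pos (f 0)); lra.
Qed.

Lemma dom_le C M y : 0 <= C -> 0 < M -> M <= Rabs y -> C/(1+y^2) <= C/M.
Proof.
  intros HC HM Hy. unfold Rdiv. apply Rmult_le_compat_l; auto.
  apply Rinv_le_contravar; auto.
  assert (y^2 = Rabs y ^2) by (rewrite <- Rsqr_pow2, <- Rsqr_pow2; apply Rsqr_abs).
  rewrite H. nra.
Qed.

Lemma tail (f : R -> R) C : (forall x, continuous f x) ->
  (forall x, Rabs (f x) <= C/(1+x^2)) ->
  forall M p q, 0 < M -> p <= q -> (M <= p \/ q <= -M) -> Rabs (RInt f p q) <= C / M.
Proof.
  intros Hc Hb M p q HM Hpq Hs.
  pose proof (C_nonneg f C Hb) as HC.
  assert (Hs' : 0 < p \/ q < 0) by lra.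
  assert (Hsq : forall x, p <= x <= q -> C/(1+x^2) <= C/x^2).
  { intros x Hx. unfold Rdiv. apply Rmult_le_compat_l; auto.
    apply Rinv_le_contravar; [|lra]. assert (x <> 0) by lra.
    simpl; rewrite Rmult_1_r; apply (Rsqr_pos_lt x); lra. }
  assert (I1 := inv_sq_int C p q Hpq Hs').
  assert (I2 := inv_sq_int (-C) p q Hpq Hs').
  assert (Le1 : RInt f p q <= C/p - C/q).
  { rewrite <- (is_RInt_unique _ _ _ _ I1). apply RInt_le; [lra | apply exr; auto | eexists; exact I1 |].
    intros x Hx. specialize (Hb x). specialize (Hsq x ltac:(lra)).
    apply Rabs_le_between in Hb. lra. }
  assert (Le2 : -C/p - -C/q <= RInt f p q).
  { rewrite <- (is_RInt_unique _ _ _ _ I2). apply RInt_le; [lra | eexists; exact I2 | apply exr; auto |].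
    intros x Hx. specialize (Hb x). specialize (Hsq x ltac:(lra)).
    apply Rabs_le_between in Hb.
    replace (-C/x^2) with (-(C/x^2)) by (unfold Rdiv; ring). lra. }
  assert (B : C/p - C/q <= C/M).
  { destruct Hs as [Hs|Hs].
    - assert (C/q >= 0). { apply Rle_ge. unfold Rdiv. apply Rmult_le_pos; auto.
        left; apply Rinv_0_lt_compat; lra. }
      assert (C/p <= C/M). { unfold Rdiv. apply Rmult_le_compat_l; auto.
        apply Rinv_le_contravar; lra. }
      lra.
    - replace (C/p - C/q) with (C/(-q) - C/(-p)) by (field; lra).
      assert (C/(-p) >= 0). { apply Rle_ge. unfold Rdiv. apply Rmult_le_pos; auto.
        left; apply Rinv_0_lt_compat; lra. }
      assert (C/(-q) <= C/M). { unfold Rdiv. apply Rmult_le_compat_l; auto.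
        apply Rinv_le_contravar; lra. }
      lra. }
  replace (-C/p - -C/q) with (-(C/p - C/q)) in Le2 by (field; lra).
  apply Rabs_le. lra.
Qed.

Lemma diff4 (f : R -> R) C : (forall x, continuous f x) ->
  (forall x, Rabs (f x) <= C/(1+x^2)) ->
  forall M a b a' b', 0 < M -> a <= -M -> M <= b -> a' <= -M -> M <= b' ->
  Rabs (RInt f a b - RInt f a' b') <= 4 * (C / M).
Proof.
  intros Hc Hb M a b a' b' HM Ha Hb0 Ha' Hb'.
  assert (Ch : forall u v w, RInt f u w = RInt f u v + RInt f v w).
  { intros u v w. symmetry. apply (RInt_Chasles (V:=R_CompleteNormedModule)); apply exr; auto. }
  rewrite (Ch a (-M) b), (Ch (-M) M b), (Ch a' (-M) b'), (Ch (-M) M b').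
  assert (T1 := tail f C Hc Hb M a (-M) HM Ha ltac:(lra)).
  assert (T2 := tail f C Hc Hb M M b HM Hb0 ltac:(lra)).
  assert (T3 := tail f C Hc Hb M a' (-M) HM Ha' ltac:(lra)).
  assert (T4 := tail f C Hc Hb M M b' HM Hb' ltac:(lra)).
  apply Rabs_le_between in T1. apply Rabs_le_between in T2.
  apply Rabs_le_between in T3. apply Rabs_le_between in T4.
  apply Rabs_le. lra.
Qed.

Lemma exists_nat_gt M : exists n : nat, M < INR n.
Proof.
  destruct (Rlt_or_le M 1) as [H|H].
  - exists 1%nat. simpl. lra.
  - destruct (archimed_cor1 (/ M) ltac:(apply Rinv_0_lt_compat; lra)) as [N [HN HN0]].
    exists N. apply lt_INR in HN0. simpl in HN0.
    apply Rinv_lt_cancel in HN; auto; lra.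
Qed.

Lemma conv (f : R -> R) C : (forall x, continuous f x) ->
  (forall x, Rabs (f x) <= C/(1+x^2)) ->
  exists l, R_improper_integral f l.
Proof.
  intros Hc Hb.
  pose proof (C_nonneg f C Hb) as HC.
  set (s := fun n : nat => RInt f (- INR n) (INR n)).
  assert (Hcau : ex_lim_seq_cauchy s).
  { intros eps.
    destruct (exists_nat_gt (4 * C / eps + 1)) as [N HN].
    assert (HeP := cond_pos eps).
    assert (HN1 : 0 < INR N).
    { assert (0 <= 4 * C / eps). { apply Rmult_le_pos. lra. left; apply Rinv_0_lt_compat; lra. } lra. }
    exists N. intros n m Hn Hm. apply le_INR in Hn. apply le_INR in Hm.
    eapply Rle_lt_trans.
    apply (diff4 f C Hc Hb (INR N)); lra.
    replace (4 * (C / INR N)) with ((4*C) / INR N) by (field; lra).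
    apply (Rmult_lt_reg_r (INR N)); auto. unfold Rdiv. rewrite Rmult_assoc, Rinv_l by lra.
    rewrite Rmult_1_r.
    assert (4 * C / eps < INR N) by lra.
    apply (Rmult_lt_compat_r eps) in H; auto. unfold Rdiv in H. rewrite Rmult_assoc, Rinv_l in H by lra. lra. }
  apply ex_lim_seq_cauchy_corr in Hcau. destruct Hcau as [l Hl].
  exists l. intros eps Heps.
  apply is_lim_seq_spec in Hl.
  destruct (Hl (mkposreal (eps/2) ltac:(lra))) as [N1 HN1]. simpl in HN1.
  set (M := 8 * C / eps + 1).
  assert (HM0 : 0 <= 8 * C / eps). { apply Rmult_le_pos. lra. left; apply Rinv_0_lt_compat; lra. }
  assert (HM : 0 < M) by (unfold M; lra).
  exists M. split; auto. intros a b Ha Hb0.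
  exists (ex_RInt_Reals_0 _ _ _ (exr f a b Hc)).
  rewrite <- RInt_Reals.
  destruct (exists_nat_gt M) as [N2 HN2].
  set (n := Nat.max N1 N2).
  assert (Hn2 : M < INR n). { eapply Rlt_le_trans; eauto. apply le_INR; lia. }
  specialize (HN1 n ltac:(lia)).
  assert (D := diff4 f C Hc Hb M a b (- INR n) (INR n) HM Ha Hb0 ltac:(lra) ltac:(lra)).
  fold (s n) in D.
  assert (4 * (C / M) < eps / 2).
  { replace (4 * (C / M)) with ((4*C)/M) by (field; lra).
    apply (Rmult_lt_reg_r M); auto. unfold Rdiv. rewrite Rmult_assoc, Rinv_l by lra.
    unfold M. unfold Rdiv. field_simplify; try lra. }
  apply Rabs_le_between in D. apply Rabs_lt_between in HN1. apply Rabs_lt_between. lra.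
Qed.

Lemma conv0 (f h : R -> R) C : (forall x, continuous f x) ->
  (forall x, is_derive h x (f x)) ->
  (forall x, Rabs (h x) <= C/(1+x^2)) ->
  R_improper_integral f 0.
Proof.
  intros Hc Hd Hb.
  pose proof (C_nonneg h C Hb) as HC.
  intros eps Heps.
  set (M := 4 * C / eps + 1).
  assert (HM0 : 0 <= 4 * C / eps). { apply Rmult_le_pos. lra. left; apply Rinv_0_lt_compat; lra. }
  assert (HM : 0 < M) by (unfold M; lra).
  exists M. split; auto. intros a b Ha Hb0.
  exists (ex_RInt_Reals_0 _ _ _ (exr f a b Hc)).
  rewrite <- RInt_Reals.
  assert (E : RInt f a b = h b - h a).
  { apply is_RInt_unique. apply (is_RInt_derive (V:=R_CompleteNormedModule) h f); intros; auto. }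
  rewrite E.
  assert (B1 := Rle_trans _ _ _ (Hb a) (dom_le C M a HC HM ltac:(rewrite Rabs_left1; lra))).
  assert (B2 := Rle_trans _ _ _ (Hb b) (dom_le C M b HC HM ltac:(rewrite Rabs_right; lra))).
  assert (2 * (C / M) < eps).
  { replace (2 * (C / M)) with ((2*C)/M) by (field; lra).
    apply (Rmult_lt_reg_r M); auto. unfold Rdiv. rewrite Rmult_assoc, Rinv_l by lra.
    unfold M. unfold Rdiv. field_simplify; try lra. }
  apply Rabs_le_between in B1. apply Rabs_le_between in B2. apply Rabs_lt_between. lra.
Qed.

Lemma same (f g : R -> R) l1 l2 : R_improper_integral f l1 -> R_improper_integral g l2 ->
  (forall eps, 0 < eps -> exists N, 0 < N /\ forall b, N <= b ->
     Rabs (RInt f (-b) b - RInt g (-b) b) < eps) -> l1 = l2.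
Proof.
  intros H1 H2 H3.
  destruct (Req_dec l1 l2) as [E|NE]; auto. exfalso.
  set (eps := Rabs (l1 - l2) / 3).
  assert (He : 0 < eps). { unfold eps. assert (0 < Rabs (l1 - l2)) by (apply Rabs_pos_lt; lra). lra. }
  destruct (H1 eps He) as [M1 [HM1 P1]].
  destruct (H2 eps He) as [M2 [HM2 P2]].
  destruct (H3 eps He) as [N [HN P3]].
  set (b := Rmax N (Rmax M1 M2)).
  assert (Hb1 : N <= b) by (unfold b; apply Rmax_l).
  assert (Hb2 : M1 <= b) by (unfold b; eapply Rle_trans; [|apply Rmax_r]; apply Rmax_l).
  assert (Hb3 : M2 <= b) by (unfold b; eapply Rle_trans; [|apply Rmax_r]; apply Rmax_r).
  destruct (P1 (-b) b ltac:(lra) Hb2) as [pr1 Q1].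
  destruct (P2 (-b) b ltac:(lra) Hb3) as [pr2 Q2].
  specialize (P3 b Hb1).
  rewrite <- RInt_Reals in Q1, Q2.
  apply Rabs_lt_between in Q1. apply Rabs_lt_between in Q2. apply Rabs_lt_between in P3.
  unfold eps in *.
  destruct (Rle_or_lt 0 (l1 - l2)).
  - rewrite Rabs_right in * by lra. lra.
  - rewrite Rabs_left in * by lra. lra.
Qed.

Definition edF (m g : R) (k : nat) (p1 p2 p1x p2x : R -> R -> Cpx) (t x : R) : R :=
  1/2 * ((fst (p1 t x) * fst (p2x t x) + snd (p1 t x) * snd (p2x t x))
        - (fst (p2 t x) * fst (p1x t x) + snd (p2 t x) * snd (p1x t x))
        + (m * rho (p1 t x) (p2 t x) - g / INR (k+1) * rho (p1 t x) (p2 t x) ^ (k+1))).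

Definition imF (p1 p2 p1x p2x : R -> R -> Cpx) (t x : R) : R :=
  1/2 * ((fst (p1 t x) * snd (p2x t x) - snd (p1 t x) * fst (p2x t x))
        - (fst (p2 t x) * snd (p1x t x) - snd (p2 t x) * fst (p1x t x))).

Definition hhF (p1 p2 : R -> R -> Cpx) (t x : R) : R :=
  1/2 * (fst (p1 t x) * snd (p2 t x) - snd (p1 t x) * fst (p2 t x)).

Definition jjF (gamma : R) (p1 p2 p1t p2t : R -> R -> Cpx) (t x : R) : R :=
  1/2 * ((fst (p1 t x) * fst (p2t t x) + snd (p1 t x) * snd (p2t t x))
        - (fst (p2 t x) * fst (p1t t x) + snd (p2 t x) * snd (p1t t x)))
  - gamma / 2 * rho (p1 t x) (p2 t x).

Definition rtF (p1 p2 p1t p2t : R -> R -> Cpx) (t x : R) : R :=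
  2 * (fst (p1 t x) * fst (p1t t x) + snd (p1 t x) * snd (p1t t x)
     - fst (p2 t x) * fst (p2t t x) - snd (p2 t x) * snd (p2t t x)).

Definition etF (m g : R) (k : nat) (p1 p2 p1t p2t p1x p2x p1tx p2tx : R -> R -> Cpx) (t x : R) : R :=
  1/2 * ((fst (p1t t x) * fst (p2x t x) + fst (p1 t x) * fst (p2tx t x)
          + snd (p1t t x) * snd (p2x t x) + snd (p1 t x) * snd (p2tx t x))
        - (fst (p2t t x) * fst (p1x t x) + fst (p2 t x) * fst (p1tx t x)
          + snd (p2t t x) * snd (p1x t x) + snd (p2 t x) * snd (p1tx t x))
        + (m - g * rho (p1 t x) (p2 t x) ^ k) * rtF p1 p2 p1t p2t t x).

Lemma edF_eq m g k p1 p2 p1x p2x t x :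
  fst (energy_density m g k (p1 t x) (p2 t x) (p1x t x) (p2x t x)) = edF m g k p1 p2 p1x p2x t x.
Proof. unfold energy_density, edF, Cmul, Cadd, Csub, Copp, Cconj, RtoC; simpl. ring. Qed.

Lemma imF_eq m g k p1 p2 p1x p2x t x :
  snd (energy_density m g k (p1 t x) (p2 t x) (p1x t x) (p2x t x)) = imF p1 p2 p1x p2x t x.
Proof. unfold energy_density, imF, Cmul, Cadd, Csub, Copp, Cconj, RtoC; simpl. ring. Qed.

Lemma sd_facts p pt px ptx : smooth_decaying p pt px ptx ->
  (forall t x, is_derive (fun s => fst (p s x)) t (fst (pt t x))) /\
  (forall t x, is_derive (fun s => snd (p s x)) t (snd (pt t x))) /\
  (forall t x, is_derive (fun y => fst (p t y)) x (fst (px t x))) /\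
  (forall t x, is_derive (fun y => snd (p t y)) x (snd (px t x))) /\
  (forall t x, is_derive (fun s => fst (px s x)) t (fst (ptx t x))) /\
  (forall t x, is_derive (fun s => snd (px s x)) t (snd (ptx t x))) /\
  (forall t x, is_derive (fun y => fst (pt t y)) x (fst (ptx t x))) /\
  (forall t x, is_derive (fun y => snd (pt t y)) x (snd (ptx t x))).
Proof.
  intros (D1 & D2 & D3 & D4 & _).
  Ltac ff D1 D2 D3 D4 := intros ?t ?x; apply is_derive_Reals;
    first [apply (proj1 (D1 _ _))|apply (proj2 (D1 _ _))|apply (proj1 (D2 _ _))|apply (proj2 (D2 _ _))
    |apply (proj1 (D3 _ _))|apply (proj2 (D3 _ _))|apply (proj1 (D4 _ _))|apply (proj2 (D4 _ _))].
  repeat (split; [ff D1 D2 D3 D4|]). ff D1 D2 D3 D4.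
Qed.

Lemma GED (m g : R) k (A1 B1 A2 B2 C1 D1 C2 D2 : R -> R) a1 b1 a2 b2 c1 d1 c2 d2 t :
  is_derive A1 t a1 -> is_derive B1 t b1 -> is_derive A2 t a2 -> is_derive B2 t b2 ->
  is_derive C1 t c1 -> is_derive D1 t d1 -> is_derive C2 t c2 -> is_derive D2 t d2 ->
  is_derive (fun s => 1/2 * ((A1 s * C2 s + B1 s * D2 s) - (A2 s * C1 s + B2 s * D1 s)
     + (m * ((A1 s ^2 + B1 s^2) - (A2 s^2 + B2 s^2))
        - g / INR (k+1) * ((A1 s ^2 + B1 s^2) - (A2 s^2 + B2 s^2)) ^ (k+1)))) t
  (1/2 * ((a1 * C2 t + A1 t * c2 + b1 * D2 t + B1 t * d2)
        - (a2 * C1 t + A2 t * c1 + b2 * D1 t + B2 t * d1)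
        + (m - g * ((A1 t^2+B1 t^2) - (A2 t^2 + B2 t^2))^k)
          * (2 * (A1 t * a1 + B1 t * b1 - A2 t * a2 - B2 t * b2)))).
Proof.
  intros HA1 HB1 HA2 HB2 HC1 HD1 HC2 HD2.
  auto_derive.
  - repeat split; eexists; eauto.
  - replace (Derive (fun x => A1 x) t) with a1 by (symmetry; apply is_derive_unique; exact HA1). replace (Derive (fun x => B1 x) t) with b1 by (symmetry; apply is_derive_unique; exact HB1). replace (Derive (fun x => A2 x) t) with a2 by (symmetry; apply is_derive_unique; exact HA2). replace (Derive (fun x => B2 x) t) with b2 by (symmetry; apply is_derive_unique; exact HB2). replace (Derive (fun x => C1 x) t) with c1 by (symmetry; apply is_derive_unique; exact HC1). replace (Derive (fun x => D1 x) t) with d1 by (symmetry; apply is_derive_unique; exact HD1). replace (Derive (fun x => C2 x) t) with c2 by (symmetry; apply is_derive_unique; exact HC2). replace (Derive (fun x => D2 x) t) with d2 by (symmetry; apply is_derive_unique; exact HD2).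
    rewrite Nat.add_1_r. simpl pred.
    set (P := (A1 t * (A1 t * 1) + B1 t * (B1 t * 1) + - (A2 t * (A2 t * 1) + B2 t * (B2 t * 1))) ^ k).
    replace (((A1 t^2+B1 t^2) - (A2 t^2 + B2 t^2))^k) with P by (unfold P; f_equal; ring).
    rewrite S_INR. field. pose proof (pos_INR k). lra.
Qed.

Lemma GJ (gamma : R) (A1 B1 A2 B2 E1 F1 E2 F2 : R -> R) a1 b1 a2 b2 e1 f1 e2 f2 t :
  is_derive A1 t a1 -> is_derive B1 t b1 -> is_derive A2 t a2 -> is_derive B2 t b2 ->
  is_derive E1 t e1 -> is_derive F1 t f1 -> is_derive E2 t e2 -> is_derive F2 t f2 ->
  is_derive (fun s => 1/2 * ((A1 s * E2 s + B1 s * F2 s) - (A2 s * E1 s + B2 s * F1 s))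
     - gamma / 2 * ((A1 s ^2 + B1 s^2) - (A2 s^2 + B2 s^2))) t
  (1/2 * ((a1 * E2 t + A1 t * e2 + b1 * F2 t + B1 t * f2)
        - (a2 * E1 t + A2 t * e1 + b2 * F1 t + B2 t * f1))
   - gamma / 2 * (2 * (A1 t * a1 + B1 t * b1 - A2 t * a2 - B2 t * b2))).
Proof.
  intros HA1 HB1 HA2 HB2 HE1 HF1 HE2 HF2.
  auto_derive.
  - repeat split; eexists; eauto.
  - replace (Derive (fun x => A1 x) t) with a1 by (symmetry; apply is_derive_unique; exact HA1). replace (Derive (fun x => B1 x) t) with b1 by (symmetry; apply is_derive_unique; exact HB1). replace (Derive (fun x => A2 x) t) with a2 by (symmetry; apply is_derive_unique; exact HA2). replace (Derive (fun x => B2 x) t) with b2 by (symmetry; apply is_derive_unique; exact HB2). replace (Derive (fun x => E1 x) t) with e1 by (symmetry; apply is_derive_unique; exact HE1). replace (Derive (fun x => F1 x) t) with f1 by (symmetry; apply is_derive_unique; exact HF1). replace (Derive (fun x => E2 x) t) with e2 by (symmetry; apply is_derive_unique; exact HE2). replace (Derive (fun x => F2 x) t) with f2 by (symmetry; apply is_derive_unique; exact HF2). ring.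
Qed.

Lemma GH (A1 B1 A2 B2 : R -> R) a1 b1 a2 b2 t :
  is_derive A1 t a1 -> is_derive B1 t b1 -> is_derive A2 t a2 -> is_derive B2 t b2 ->
  is_derive (fun s => 1/2 * (A1 s * B2 s - B1 s * A2 s)) t
  (1/2 * ((A1 t * b2 - B1 t * a2) - (A2 t * b1 - B2 t * a1))).
Proof.
  intros HA1 HB1 HA2 HB2.
  auto_derive.
  - repeat split; eexists; eauto.
  - replace (Derive (fun x => A1 x) t) with a1 by (symmetry; apply is_derive_unique; exact HA1). replace (Derive (fun x => B1 x) t) with b1 by (symmetry; apply is_derive_unique; exact HB1). replace (Derive (fun x => A2 x) t) with a2 by (symmetry; apply is_derive_unique; exact HA2). replace (Derive (fun x => B2 x) t) with b2 by (symmetry; apply is_derive_unique; exact HB2). ring.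
Qed.

Lemma ALG (m gamma G A1 B1 A2 B2 xa1 xb1 xa2 xb2 ta1 tb1 ta2 tb2 ya1 yb1 ya2 yb2 : R) :
  - tb1 = xa2 - G * A1 + m * A1 - gamma * B2 ->
  ta1 = xb2 - G * B1 + m * B1 + gamma * A2 ->
  - tb2 = - xa1 + G * A2 - m * A2 - gamma * B1 ->
  ta2 = - xb1 + G * B2 - m * B2 + gamma * A1 ->
  1/2 * ((ta1 * xa2 + A1 * ya2 + tb1 * xb2 + B1 * yb2)
        - (ta2 * xa1 + A2 * ya1 + tb2 * xb1 + B2 * yb1)
        + (m - G) * (2 * (A1 * ta1 + B1 * tb1 - A2 * ta2 - B2 * tb2)))
  = 1/2 * ((xa1 * ta2 + A1 * ya2 + xb1 * tb2 + B1 * yb2)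
        - (xa2 * ta1 + A2 * ya1 + xb2 * tb1 + B2 * yb1))
   - gamma / 2 * (2 * (A1 * xa1 + B1 * xb1 - A2 * xa2 - B2 * xb2)).
Proof.
  intros H1 H2 H3 H4.
  assert (tb1 = - (xa2 - G * A1 + m * A1 - gamma * B2)) by lra.
  assert (tb2 = - (- xa1 + G * A2 - m * A2 - gamma * B1)) by lra.
  subst. field.
Qed.

Lemma c2d_pow f n x y : continuity_2d_pt f x y -> continuity_2d_pt (fun u v => f u v ^ n) x y.
Proof.
  intros H. induction n.
  - simpl. apply continuity_2d_pt_const.
  - simpl. apply continuity_2d_pt_mult; auto.
Qed.

Lemma cont2_c f : cont2 f -> forall t x, continuity_2d_pt f t x.
Proof.
  intros H t x eps. destruct (H t x eps (cond_pos eps)) as [d [Hd P]].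
  exists (mkposreal d Hd). intros u v Hu Hv. apply P; auto.
Qed.

Lemma c2d_x f t x : continuity_2d_pt f t x -> continuous (fun y => f t y) x.
Proof.
  intros H. apply continuity_pt_filterlim. intros eps Heps.
  destruct (H (mkposreal eps Heps)) as [d Hd].
  exists d. split; [apply cond_pos|]. intros y [_ Hy]. unfold R_dist in *.
  apply Hd; auto. unfold Rminus. rewrite Rplus_opp_r, Rabs_R0. apply cond_pos.
Qed.

Definition Bd (a K x : R) := Rabs a <= K / (1 + x^2).

Lemma w_pos x : 0 < / (1 + x^2).
Proof. apply Rinv_0_lt_compat. pose proof (pow2_ge_0 x). lra. Qed.
Lemma w_le1 x : / (1 + x^2) <= 1.
Proof. rewrite <- Rinv_1. apply Rinv_le_contravar. lra. pose proof (pow2_ge_0 x). lra. Qed.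

Lemma Bd_K a K x : Bd a K x -> 0 <= K.
Proof.
  unfold Bd, Rdiv. intros H. pose proof (w_pos x). pose proof (Rabs_pos a).
  destruct (Rle_or_lt 0 K); auto. nra.
Qed.

Lemma bd_plus a b K1 K2 x : Bd a K1 x -> Bd b K2 x -> Bd (a + b) (K1 + K2) x.
Proof. unfold Bd, Rdiv. intros. eapply Rle_trans. apply Rabs_triang. lra. Qed.
Lemma bd_minus a b K1 K2 x : Bd a K1 x -> Bd b K2 x -> Bd (a - b) (K1 + K2) x.
Proof. unfold Bd, Rdiv. intros. eapply Rle_trans. apply Rabs_triang. rewrite Rabs_Ropp. lra. Qed.
Lemma bd_mult a b K1 K2 x : Bd a K1 x -> Bd b K2 x -> Bd (a * b) (K1 * K2) x.
Proof.
  intros H1 H2. pose proof (Bd_K _ _ _ H1). pose proof (Bd_K _ _ _ H2).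
  unfold Bd, Rdiv in *. rewrite Rabs_mult. pose proof (w_pos x). pose proof (w_le1 x).
  set (w := / (1 + x^2)) in *.
  apply Rle_trans with ((K1 * w) * (K2 * w)).
  apply Rmult_le_compat; auto using Rabs_pos.
  replace (K1 * K2 * w) with ((K1 * w) * K2) by ring.
  apply Rmult_le_compat_l. apply Rmult_le_pos; lra.
  rewrite <- (Rmult_1_r K2) at 2. apply Rmult_le_compat_l; lra.
Qed.
Lemma bd_cmult c a K x : Bd a K x -> Bd (c * a) (Rabs c * K) x.
Proof.
  unfold Bd, Rdiv. intros H. rewrite Rabs_mult, Rmult_assoc.
  apply Rmult_le_compat_l; auto using Rabs_pos.
Qed.
Lemma bd_pow a K x n : Bd a K x -> Bd (a ^ (S n)) (K ^ (S n)) x.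
Proof.
  intros H. induction n.
  - simpl. rewrite !Rmult_1_r. auto.
  - change (a ^ S (S n)) with (a * a ^ S n). change (K ^ S (S n)) with (K * K ^ S n).
    apply bd_mult; auto.
Qed.

Lemma is_derive_eq (f : R -> R) x l l' : is_derive f x l -> l = l' -> is_derive f x l'.
Proof. intros H E; rewrite <- E; auto. Qed.

Lemma R_improper_ext f g l : (forall x, f x = g x) -> R_improper_integral g l -> R_improper_integral f l.
Proof.
  intros H. replace f with g; auto. apply functional_extensionality. intros; auto.
Qed.

Lemma param_deriv (f df j : R -> R -> R) a b :
  (forall t x, is_derive (fun s => f s x) t (df t x)) ->
  (forall t x, continuity_2d_pt df t x) ->
  (forall t x, continuous (fun y => f t y) x) ->
  (forall t x, is_derive (fun y => j t y) x (df t x)) ->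
  forall t, is_derive (fun s => RInt (fun y => f s y) a b) t (j t b - j t a).
Proof.
  intros Hd Hc Hf Hj t.
  assert (E : j t b - j t a = RInt (fun y => Derive (fun u => f u y) t) a b).
  { rewrite (RInt_ext _ (fun y => df t y)).
    2:{ intros y _. apply is_derive_unique. apply Hd. }
    symmetry. apply is_RInt_unique.
    apply (is_RInt_derive (V:=R_CompleteNormedModule) (fun y => j t y) (fun y => df t y)); intros; auto.
    apply (c2d_x df t x). auto. }
  rewrite E. apply is_derive_RInt_param.
  - apply filter_forall. intros. eexists; eauto.
  - intros y _. apply continuity_2d_pt_ext with (f := df).
    + intros u v. symmetry. apply is_derive_unique. apply Hd.
    + auto.
  - apply filter_forall. intros. apply exr; auto.
Qed.

Lemma abs_between c t : Rmin 0 t <= c <= Rmax 0 t -> Rabs c <= Rabs t.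
Proof.
  intros [H1 H2]. unfold Rmin, Rmax in *. destruct (Rle_dec 0 t).
  - rewrite Rabs_right, Rabs_right; lra.
  - apply Rabs_le. rewrite Rabs_left; lra.
Qed.

Ltac bdtac x :=
  repeat match goal with
  | |- Bd (_ + _) _ _ => apply bd_plus
  | |- Bd (_ - _) _ _ => apply bd_minus
  | |- Bd (_ ^ S _) _ _ => apply bd_pow
  | |- Bd (?c * _) _ _ =>
      match c with
      | context [x] => apply bd_mult
      | _ => apply bd_cmult
      end
  | |- Bd _ _ _ => eassumption
  end.

Ltac c2tac :=
  repeat first [ apply continuity_2d_pt_plus | apply continuity_2d_pt_minus
               | apply c2d_pow | apply continuity_2d_pt_mult
               | apply continuity_2d_pt_const | apply continuity_2d_pt_opp
               | match goal with H : forall _ _, continuity_2d_pt _ _ _ |- _ => apply H end ].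

Theorem mainTheorem8 (m g : R) (k : nat) (gamma : R)
  (psi1 psi2 psi1_t psi2_t psi1_x psi2_x psi1_tx psi2_tx : R -> R -> Cpx) :
  0 < m -> 0 < g ->
  smooth_decaying psi1 psi1_t psi1_x psi1_tx ->
  smooth_decaying psi2 psi2_t psi2_x psi2_tx ->
  (forall t x, soler_eq1 m g gamma k (psi1 t x) (psi2 t x) (psi1_t t x) (psi2_x t x)) ->
  (forall t x, soler_eq2 m g gamma k (psi1 t x) (psi2 t x) (psi2_t t x) (psi1_x t x)) ->
  exists E : R -> R,
    (forall t, C_improper_integral
       (fun x => energy_density m g k (psi1 t x) (psi2 t x) (psi1_x t x) (psi2_x t x))
       (RtoC (E t))) /\
    (forall t, derivable_pt_lim E t 0).
Proof.
  intros Hm Hg S1 S2 Eq1 Eq2.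
  destruct (sd_facts _ _ _ _ S1) as (ta1 & tb1 & xa1 & xb1 & txa1 & txb1 & xta1 & xtb1).
  destruct (sd_facts _ _ _ _ S2) as (ta2 & tb2 & xa2 & xb2 & txa2 & txb2 & xta2 & xtb2).
  assert (Det : forall t x, is_derive (fun s => edF m g k psi1 psi2 psi1_x psi2_x s x) t
            (etF m g k psi1 psi2 psi1_t psi2_t psi1_x psi2_x psi1_tx psi2_tx t x)).
  { intros t x.
    exact (GED m g k (fun s => fst (psi1 s x)) (fun s => snd (psi1 s x))
      (fun s => fst (psi2 s x)) (fun s => snd (psi2 s x))
      (fun s => fst (psi1_x s x)) (fun s => snd (psi1_x s x))
      (fun s => fst (psi2_x s x)) (fun s => snd (psi2_x s x)) _ _ _ _ _ _ _ _ t
      (ta1 t x) (tb1 t x) (ta2 t x) (tb2 t x) (txa1 t x) (txb1 t x) (txa2 t x) (txb2 t x)). }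
  assert (Djx : forall t x, is_derive (fun y => jjF gamma psi1 psi2 psi1_t psi2_t t y) x
            (etF m g k psi1 psi2 psi1_t psi2_t psi1_x psi2_x psi1_tx psi2_tx t x)).
  { intros t x. eapply is_derive_eq.
    exact (GJ gamma (fun y => fst (psi1 t y)) (fun y => snd (psi1 t y))
      (fun y => fst (psi2 t y)) (fun y => snd (psi2 t y))
      (fun y => fst (psi1_t t y)) (fun y => snd (psi1_t t y))
      (fun y => fst (psi2_t t y)) (fun y => snd (psi2_t t y)) _ _ _ _ _ _ _ _ x
      (xa1 t x) (xb1 t x) (xa2 t x) (xb2 t x) (xta1 t x) (xtb1 t x) (xta2 t x) (xtb2 t x)).
    unfold etF, rtF. symmetry. apply ALG with (G := g * rho (psi1 t x) (psi2 t x) ^ k).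
    - specialize (Eq1 t x). unfold soler_eq1, Cmul, Cadd, Copp, Ci, RtoC in Eq1.
      apply (f_equal fst) in Eq1. simpl in Eq1. lra.
    - specialize (Eq1 t x). unfold soler_eq1, Cmul, Cadd, Copp, Ci, RtoC in Eq1.
      apply (f_equal snd) in Eq1. simpl in Eq1. lra.
    - specialize (Eq2 t x). unfold soler_eq2, Cmul, Cadd, Copp, Ci, RtoC in Eq2.
      apply (f_equal fst) in Eq2. simpl in Eq2. lra.
    - specialize (Eq2 t x). unfold soler_eq2, Cmul, Cadd, Copp, Ci, RtoC in Eq2.
      apply (f_equal snd) in Eq2. simpl in Eq2. lra. }
  assert (Dh : forall t x, is_derive (fun y => hhF psi1 psi2 t y) x (imF psi1 psi2 psi1_x psi2_x t x)).
  { intros t x.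
    exact (GH (fun y => fst (psi1 t y)) (fun y => snd (psi1 t y))
      (fun y => fst (psi2 t y)) (fun y => snd (psi2 t y)) _ _ _ _ x
      (xa1 t x) (xb1 t x) (xa2 t x) (xb2 t x)). }
  destruct S1 as (_&_&_&_& [c1a c1b] & [c1ta c1tb] & [c1xa c1xb] & [c1txa c1txb] & B1 & B1t & B1x & _).
  destruct S2 as (_&_&_&_& [c2a c2b] & [c2ta c2tb] & [c2xa c2xb] & [c2txa c2txb] & B2 & B2t & B2x & _).
  pose proof (cont2_c _ c1a) as Pc1a; clear c1a.
  pose proof (cont2_c _ c1b) as Pc1b; clear c1b.
  pose proof (cont2_c _ c1ta) as Pc1ta; clear c1ta.
  pose proof (cont2_c _ c1tb) as Pc1tb; clear c1tb.
  pose proof (cont2_c _ c1xa) as Pc1xa; clear c1xa.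
  pose proof (cont2_c _ c1xb) as Pc1xb; clear c1xb.
  pose proof (cont2_c _ c1txa) as Pc1txa; clear c1txa.
  pose proof (cont2_c _ c1txb) as Pc1txb; clear c1txb.
  pose proof (cont2_c _ c2a) as Pc2a; clear c2a.
  pose proof (cont2_c _ c2b) as Pc2b; clear c2b.
  pose proof (cont2_c _ c2ta) as Pc2ta; clear c2ta.
  pose proof (cont2_c _ c2tb) as Pc2tb; clear c2tb.
  pose proof (cont2_c _ c2xa) as Pc2xa; clear c2xa.
  pose proof (cont2_c _ c2xb) as Pc2xb; clear c2xb.
  pose proof (cont2_c _ c2txa) as Pc2txa; clear c2txa.
  pose proof (cont2_c _ c2txb) as Pc2txb; clear c2txb.
  assert (Cet : forall t x, continuity_2d_pt
     (etF m g k psi1 psi2 psi1_t psi2_t psi1_x psi2_x psi1_tx psi2_tx) t x).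
  { intros t x. unfold etF, rtF, rho, Cnorm2. c2tac. }
  assert (Ced : forall t x, continuity_2d_pt (edF m g k psi1 psi2 psi1_x psi2_x) t x).
  { intros t x. unfold edF, rho, Cnorm2. c2tac. }
  assert (Cim : forall t x, continuity_2d_pt (imF psi1 psi2 psi1_x psi2_x) t x).
  { intros t x. unfold imF. c2tac. }
  assert (Bnd : forall T, exists C1 C2 C3, forall t x, Rabs t <= T ->
     Bd (edF m g k psi1 psi2 psi1_x psi2_x t x) C1 x /\
     Bd (jjF gamma psi1 psi2 psi1_t psi2_t t x) C2 x /\
     Bd (hhF psi1 psi2 t x) C3 x).
  { intros T.
    destruct (B1 T) as [K1 HK1]. destruct (B1t T) as [K1t HK1t]. destruct (B1x T) as [K1x HK1x].
    destruct (B2 T) as [K2 HK2]. destruct (B2t T) as [K2t HK2t]. destruct (B2x T) as [K2x HK2x].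
    do 3 eexists. intros t x Ht.
    destruct (HK1 t x Ht) as [L1 L2]. destruct (HK1t t x Ht) as [L3 L4].
    destruct (HK1x t x Ht) as [L5 L6]. destruct (HK2 t x Ht) as [L7 L8].
    destruct (HK2t t x Ht) as [L9 L10]. destruct (HK2x t x Ht) as [L11 L12].
    split; [|split].
    - unfold edF, rho, Cnorm2. rewrite Nat.add_1_r. bdtac x.
    - unfold jjF, rho, Cnorm2. bdtac x.
    - unfold hhF. bdtac x. }
  assert (Ced1 : forall t x, continuous (fun y => edF m g k psi1 psi2 psi1_x psi2_x t y) x).
  { intros t x. apply (c2d_x (edF m g k psi1 psi2 psi1_x psi2_x)). auto. }
  assert (Cim1 : forall t x, continuous (fun y => imF psi1 psi2 psi1_x psi2_x t y) x).
  { intros t x. apply (c2d_x (imF psi1 psi2 psi1_x psi2_x)). auto. }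
  assert (Conv : forall t, exists l, R_improper_integral (fun x => edF m g k psi1 psi2 psi1_x psi2_x t x) l).
  { intros t. destruct (Bnd (Rabs t)) as (C1 & C2 & C3 & HB).
    apply (conv _ C1); auto. intros x. apply (HB t x). lra. }
  destruct (Conv 0) as [L0 HL0].
  exists (fun _ => L0). split.
  2:{ intros t. apply derivable_pt_lim_const. }
  intros t. split.
  - apply (R_improper_ext _ (fun x => edF m g k psi1 psi2 psi1_x psi2_x t x)).
    { intros x. apply edF_eq. }
    destruct (Conv t) as [Lt HLt].
    replace (fst (RtoC L0)) with Lt; [exact HLt|]. simpl.
    apply (same _ _ _ _ HLt HL0).
    intros eps Heps.
    destruct (Bnd (Rabs t)) as (C1 & C2 & C3 & HB).
    assert (HC2 : 0 <= C2).
    { apply (Bd_K (jjF gamma psi1 psi2 psi1_t psi2_t t 0) C2 0). apply (HB t 0). lra. }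
    set (N := 2 * C2 * Rabs t / eps + 1).
    assert (HN0 : 0 <= 2 * C2 * Rabs t / eps).
    { apply Rmult_le_pos. pose proof (Rabs_pos t). nra. left; apply Rinv_0_lt_compat; lra. }
    exists N. split; [unfold N; lra|]. intros b Hb.
    assert (Hb0 : 0 < b) by (unfold N in Hb; lra).
    destruct (MVT_abs (fun s => RInt (fun y => edF m g k psi1 psi2 psi1_x psi2_x s y) (-b) b)
       (fun s => jjF gamma psi1 psi2 psi1_t psi2_t s b - jjF gamma psi1 psi2 psi1_t psi2_t s (-b)) 0 t)
      as [c [Hc Hcr]].
    { intros c _. apply is_derive_Reals.
      apply (param_deriv (edF m g k psi1 psi2 psi1_x psi2_x)
        (etF m g k psi1 psi2 psi1_t psi2_t psi1_x psi2_x psi1_tx psi2_tx)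
        (jjF gamma psi1 psi2 psi1_t psi2_t)); auto. }
    simpl in Hc. rewrite Hc.
    assert (Hct := abs_between c t Hcr).
    destruct (HB c b Hct) as [_ [J1 _]]. destruct (HB c (-b) Hct) as [_ [J2 _]].
    unfold Bd in J1, J2.
    assert (D1 := dom_le C2 b b HC2 Hb0 ltac:(rewrite Rabs_right; lra)).
    assert (D2 := dom_le C2 b (-b) HC2 Hb0 ltac:(rewrite Rabs_Ropp, Rabs_right; lra)).
    assert (Hj : Rabs (jjF gamma psi1 psi2 psi1_t psi2_t c b - jjF gamma psi1 psi2 psi1_t psi2_t c (- b)) <= 2 * (C2 / b)).
    { eapply Rle_trans. apply Rabs_triang. rewrite Rabs_Ropp. lra. }
    rewrite Rminus_0_r.
    apply Rle_lt_trans with (2 * (C2 / b) * Rabs t).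
    { apply Rmult_le_compat_r; auto using Rabs_pos. }
    assert (Hbn : N <= b) by auto.
    replace (2 * (C2 / b) * Rabs t) with ((2 * C2 * Rabs t) / b) by (field; lra).
    apply (Rmult_lt_reg_r b); auto. unfold Rdiv. rewrite Rmult_assoc, Rinv_l by lra. rewrite Rmult_1_r.
    unfold N in Hbn.
    assert (2 * C2 * Rabs t / eps < b) by lra.
    apply (Rmult_lt_compat_r eps) in H; auto. unfold Rdiv in H. rewrite Rmult_assoc, Rinv_l in H by lra. lra.
  - apply (R_improper_ext _ (fun x => imF psi1 psi2 psi1_x psi2_x t x)).
    { intros x. apply imF_eq. }
    simpl. destruct (Bnd (Rabs t)) as (C1 & C2 & C3 & HB).
    apply (conv0 _ (fun y => hhF psi1 psi2 t y) C3); auto.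
    intros x. apply (HB t x). lra.
Qed.
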